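(* Let $m\ge2$, $k\ge2$. (1) For every irreducible $(\mathbf T,\sigma)\in\mathcal C(m)$, \[ km-|\mathbf T|+\frac{a(\sigma)}2\ge m . \] (2) If $(\mathbf T,\sigma)\in\mathcal C(m)$ is irreducible but not circle-like and $km-|\mathbf T|+\frac{a(\sigma)}2=m$, then the cycle decomposition of $\sigma$ contains at least one cycle of length at least $3$.
   Context: $[p]=\{1,\dots,p\}$. $S(m,k)$ is the set of equivalence classes (under permutations of $[km]$ applied entrywise; a representative fixed in each class) of $\mathbf T=(T_1,\dots,T_m)$, $T_i=(T_{i,1},\dots,T_{i,k})\in[km]^k$ with pairwise distinct entries; $\mathrm{Range}(\mathbf T)=\{T_{i,j}\}$, $|\mathbf T|=|\mathrm{Range}(\mathbf T)|$. For $\sigma$ a permutation of $\mathrm{Range}(\mathbf T)$, $a(\sigma)=\#\{q:\sigma(q)\ne q\}$. The $(\mathbf T,\sigma)$-graph has vertices $(i,j)$, $i\in[m],j\in[k]$; black edges $(i,j)$–$(i,j+1)$; solid red edges between distinct $(i,j),(i',j')$ with $T_{i,j}=T_{i',j'}$; dotted red edges between $(i,j),(i',j')$ with $T_{i,j}\ne T_{i',j'}$ and $\sigma(T_{i,j})=T_{i',j'}$ or $\sigma(T_{i',j'})=T_{i,j}$. $\mathcal C(m)$: pairs with $\mathbf T\in S(m,k)$ and connected graph. $T_{i,j}$ is a connection point if $\sigma(T_{i,j})\notin T_i$ or $T_{i,j}\in T_{i'}$ for some $i'\ne i$. $(\mathbf T,\sigma)$ is reducible if its graph is connected and there are $i,j$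 with $T_{i,j}$ the only connection point in $T_i$ and $\sigma(x)=x$ for all entries $x\ne T_{i,j}$ of $T_i$; irreducible = connected and not reducible. An irreducible pair is circle-like if for each $i\in[m]$ there are exactly two distinct $i_1,i_2\in[k]$ such that each of $(i,i_1),(i,i_2)$ has exactly one red edge and that edge goes to some $(i',j')$ with $i'\ne i$, and all other vertices have no red edges. *)

(* Defs.v *)
From HB Require Import structures.
From mathcomp Require Import all_boot all_order all_algebra all_fingroup.
Set Implicit Arguments. Unset Strict Implicit. Unset Printing Implicit Defensive.

(* Indices are 0-based: [p] is rendered as 'I_p.  A tuple T = (T_1..T_m),
   T_i in [km]^k, is a function T : 'I_m -> 'I_k -> 'I_(k*m); the entries of
   each T_i are pairwise distinct (row_inj).  sigma, a permutation of Range T,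
   is a {perm 'I_(k*m)} supported on Range T (perm_on). *)

Section Defs.
Variables (m k : nat).
Implicit Types (T : 'I_m -> 'I_k -> 'I_(k * m)) (s : {perm 'I_(k * m)}).

Definition vert := ('I_m * 'I_k)%type.

Definition row_inj T := forall i, injective (T i).

Definition Range T : {set 'I_(k * m)} := [set T i j | i : 'I_m, j : 'I_k].

Definition sizeT T : nat := #|Range T|.

Definition amov s : nat := #|[set q in 'I_(k * m) | s q != q]|.

Definition Tv T (v : vert) := T v.1 v.2.

Definition black_edge (v w : vert) : bool :=
  (v.1 == w.1) && (((v.2 : nat).+1 == w.2) || ((w.2 : nat).+1 == v.2)).

Definition solid_edge T (v w : vert) : bool :=
  (v != w) && (Tv T v == Tv T w).

Definition dotted_edge T s (v w : vert) : bool :=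
  (Tv T v != Tv T w) && ((s (Tv T v) == Tv T w) || (s (Tv T w) == Tv T v)).

Definition red_edge T s (v w : vert) : bool :=
  solid_edge T v w || dotted_edge T s v w.

Definition graph_edge T s (v w : vert) : bool :=
  black_edge v w || red_edge T s v w.

Definition graph_connected T s : Prop :=
  forall v w : vert, connect (graph_edge T s) v w.

Definition inC T s : Prop :=
  row_inj T /\ perm_on (Range T) s /\ graph_connected T s.

Definition rowset T (i : 'I_m) : {set 'I_(k * m)} := [set T i j | j : 'I_k].

Definition connection_point T s (i : 'I_m) (j : 'I_k) : bool :=
  (s (T i j) \notin rowset T i) ||
  [exists i' : 'I_m, (i' != i) && (T i j \in rowset T i')].

Definition reducible T s : Prop :=
  graph_connected T s /\
  exists (i : 'I_m) (j : 'I_k),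
    [/\ connection_point T s i j,
        (forall j' : 'I_k, connection_point T s i j' -> T i j' = T i j) &
        (forall x, x \in rowset T i -> x != T i j -> s x = x)].

Definition irreducible T s : Prop := graph_connected T s /\ ~ reducible T s.

Definition red_deg T s (v : vert) : nat := #|[set w | red_edge T s v w]|.

Definition outer_red T s (i : 'I_m) (j : 'I_k) : bool :=
  (red_deg T s (i, j) == 1) &&
  [forall w : vert, red_edge T s (i, j) w ==> (w.1 != i)].

Definition circle_like T s : Prop :=
  irreducible T s /\
  forall i : 'I_m,
    #|[set j | outer_red T s i j]| = 2 /\
    (forall j : 'I_k, ~~ outer_red T s i j -> red_deg T s (i, j) = 0).

End Defs.

(* Main.v *)
Require Import Defs.
From mathcomp Require Import all_boot all_order all_algebra all_fingroup.
From mathcomp Require Import zify.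
Set Implicit Arguments. Unset Strict Implicit. Unset Printing Implicit Defensive.

Section Main.
Variables (m k : nat) (T : 'I_m -> 'I_k -> 'I_(k * m)) (s : {perm 'I_(k * m)}).
Hypothesis rowI : row_inj T.
Hypothesis sOn : perm_on (Range T) s.
Hypothesis conn : graph_connected T s.
Hypothesis m2 : 2 <= m.
Hypothesis k2 : 2 <= k.

Lemma in_rowset i j : T i j \in rowset T i.
Proof. by apply/imsetP; exists j. Qed.

Lemma rowsetP i x : reflect (exists j, x = T i j) (x \in rowset T i).
Proof. by apply: (iffP imsetP) => [[j _ ->]|[j ->]]; exists j. Qed.

Lemma cp_other i j i' j' : i' != i -> T i j = T i' j' -> connection_point T s i j.
Proof.
move=> ne e; apply/orP; right; apply/existsP; exists i'; rewrite ne /= e.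
exact: in_rowset.
Qed.

Lemma no_cp_false i : (forall j, ~~ connection_point T s i j) -> False.
Proof.
move=> ncp.
have stab : forall j, exists j2, s (T i j) = T i j2.
  move=> j; move: (ncp j); rewrite /connection_point negb_or => /andP[/negPn h _].
  by case/rowsetP: h => j2 ->; exists j2.
have onto : forall j, exists j2, s (T i j2) = T i j.
  move=> j.
  have sub : s @: rowset T i \subset rowset T i.
    apply/subsetP => y /imsetP[x /rowsetP[j1 ->] ->].
    by case: (stab j1) => j2 ->; apply: in_rowset.
  have eqS : s @: rowset T i = rowset T i.
    by apply/eqP; rewrite eqEcard sub (card_imset _ (@perm_inj _ s)) /= leqnn.
  have : T i j \in s @: rowset T i by rewrite eqS in_rowset.
  by case/imsetP => x /rowsetP[j2 ->] e; exists j2.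
have key : forall v w : vert m k, graph_edge T s v w -> v.1 = i -> w.1 = i.
  case=> vi vj [wi wj] /= E hv; subst vi.
  apply/eqP; apply: contraT => hw.
  move: E; rewrite /graph_edge /black_edge /red_edge /solid_edge /dotted_edge /Tv /=.
  rewrite eq_sym (negbTE hw) /=.
  case/orP=> [/andP[_ /eqP e]|/andP[_ /orP[/eqP e|/eqP e]]].
  - by move: (ncp vj); rewrite (cp_other (j' := wj) hw e).
  - case: (stab vj) => j2 e2.
    by move: (ncp j2); rewrite (cp_other (j' := wj) hw) // -e2 e.
  - case: (onto vj) => j2 e2.
    have e3 : T i j2 = T wi wj by apply: (@perm_inj _ s); rewrite e2 e.
    by move: (ncp j2); rewrite (cp_other (j' := wj) hw e3).
have k0 : 0 < k by apply: leq_trans k2.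
have m0 : 0 < m by apply: leq_trans m2.
have m1 : 1 < m by [].
pose i0 := Ordinal m0; pose i1 := Ordinal m1.
pose i' := if i == i0 then i1 else i0.
have ne : i' != i.
  rewrite /i'; case: (i =P i0) => [->|/eqP h]; first by apply/eqP => /(congr1 val).
  by rewrite eq_sym.
pose j0 := Ordinal k0.
case/connectP: (conn (i, j0) (i', j0)) => p Hp Hl.
have : (last (i, j0) p).1 = i.
  have h0 : (i, j0).1 = i by [].
  elim: p (i, j0) Hp {Hl} h0 => [|y p IH] x /=; first by [].
  by move=> /andP[exy py] hx; exact: IH py (key _ _ exy hx).
by rewrite -Hl /= => e; move: ne; rewrite e eqxx.
Qed.

Definition good (v : vert m k) : bool :=
  connection_point T s v.1 v.2 || (s (Tv T v) != Tv T v).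

Lemma sumb_card (I : finType) (P Q : pred I) :
  \sum_(x | P x) (Q x : nat) = #|[set x | P x && Q x]|.
Proof. by rewrite -sum1dep_card big_mkcondr /=; apply: eq_bigr => x _; case: (Q x). Qed.

Lemma card_sumb (I : finType) (Q : pred I) :
  #|[set x | Q x]| = \sum_(x | true) (Q x : nat).
Proof. by rewrite sumb_card; apply: eq_card => x; rewrite !inE. Qed.

Lemma two_le_card (I : finType) (A : {set I}) a b :
  a \in A -> b \in A -> a != b -> 2 <= #|A|.
Proof.
move=> ha hb ne; have : #|[set a; b]| <= #|A|.
  by apply: subset_leq_card; apply/subsetP => x; rewrite !inE => /orP[/eqP->|/eqP->].
by rewrite cards2 ne.
Qed.

Lemma row_good2 i : ~ reducible T s -> 2 <= #|[set j | good (i, j)]|.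
Proof.
move=> Hred; rewrite leqNgt; apply/negP; rewrite ltnS => h.
have uq : forall a b, good (i, a) -> good (i, b) -> a = b.
  move=> a b ga gb; apply/eqP; apply: contraT => nab.
  have := two_le_card (A := [set j | good (i, j)]) (a := a) (b := b).
  rewrite !inE ga gb nab => /(_ isT isT isT) h2.
  by have := leq_trans h2 h.
case: (pickP (fun j => connection_point T s i j)) => [j0 cp0|ncp]; last first.
  by apply: (no_cp_false (i := i)) => j; rewrite ncp.
apply: Hred; split => //; exists i, j0; split => //.
- move=> j' cpj'; congr (T i _); apply: uq; by rewrite /good /= ?cpj' ?cp0.
- move=> x /rowsetP [j ->] nx; apply/eqP; apply: contraT => mv.
  have gj : good (i, j) by rewrite /good /Tv /= mv orbT.
  have gj0 : good (i, j0) by rewrite /good /= cp0.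
  have e := uq j j0 gj gj0.
  by rewrite e eqxx in nx.
Qed.

Lemma sum_rows :
  #|[set v | good v]| = \sum_(i < m) #|[set j | good (i, j)]|.
Proof.
rewrite card_sumb.
have -> : \sum_(x | true) (good x : nat) = \sum_(p | true && true) (good (p.1, p.2) : nat).
  by apply: eq_bigr => [[a b]].
rewrite -(pair_big xpredT xpredT (fun i j => (good (i, j) : nat))) /=.
by apply: eq_bigr => i _; rewrite sumb_card; apply: eq_card => j; rewrite !inE.
Qed.

Definition dd x := #|[set v : vert m k | Tv T v == x]|.
Definition gg x := #|[set v : vert m k | (Tv T v == x) && good v]|.

Lemma TvR (v : vert m k) : Tv T v \in Range T.
Proof. by apply/imset2P; exists v.1 v.2. Qed.

Lemma part_sum (F : vert m k -> nat) :
  \sum_(v | true) F v = \sum_(x in Range T) \sum_(v | true && (Tv T v == x)) F v.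
Proof. by apply: partition_big => v _; apply: TvR. Qed.

Lemma P_sum : #|[set v | good v]| = \sum_(x in Range T) gg x.
Proof.
rewrite card_sumb part_sum; apply: eq_bigr => x _.
by rewrite sumb_card /gg; apply: eq_card => v; rewrite !inE.
Qed.

Lemma km_sum : k * m = \sum_(x in Range T) dd x.
Proof.
transitivity (\sum_(v : vert m k | true) 1).
  by rewrite sum1dep_card cardsT card_prod !card_ord mulnC.
rewrite part_sum; apply: eq_bigr => x _.
by rewrite sum1dep_card /dd; apply: eq_card => v; rewrite !inE.
Qed.

Lemma a_sum : amov s = \sum_(x in Range T) (s x != x : nat).
Proof.
rewrite sumb_card /amov; apply: eq_card => q; rewrite !inE /=.
case: (boolP (q \in Range T)) => // hq.
by rewrite (out_perm sOn hq) eqxx.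
Qed.

Lemma n_sum : sizeT T = \sum_(x in Range T) 1.
Proof. by rewrite sum1_card. Qed.

Lemma value_facts x : x \in Range T ->
  [/\ 1 <= dd x, gg x <= dd x & (dd x = 1 -> s x = x -> gg x = 0)].
Proof.
case/imset2P => i j _ _ ->; split.
- by rewrite card_gt0; apply/set0Pn; exists (i, j); rewrite inE.
- by apply: subset_leq_card; apply/subsetP => v; rewrite !inE => /andP[].
- move=> d1 fx; apply/eqP; rewrite cards_eq0; apply/eqP/setP => v; rewrite !inE.
  apply/negbTE; apply/negP => /andP[/eqP ev].
  rewrite /good ev fx eqxx orbF /connection_point.
  case/orP => [|/existsP[i' /andP[ne /rowsetP[j' e']]]].
    by move: ev; case: v => a b; rewrite /Tv /= => ev; rewrite ev fx -ev in_rowset.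
  have := two_le_card (A := [set v : vert m k | Tv T v == T i j]) (a := v) (b := (i', j')).
  rewrite !inE ev /Tv /= -e' eqxx.
  have nev : v != (i', j') by case: v {ev} e' ne => a b /= _ ne; apply: contra ne => /eqP [->].
  by rewrite -[X in 1 < X]/(dd (T i j)) d1 -/(Tv T v) ev eqxx nev => /(_ isT isT isT).
Qed.

Lemma value_ineq :
  #|[set v | good v]| + 2 * sizeT T <= 2 * (k * m) + amov s
    ?= iff [forall (x | x \in Range T), gg x + 2 == 2 * dd x + (s x != x)].
Proof.
have -> : #|[set v | good v]| + 2 * sizeT T = \sum_(x in Range T) (gg x + 2).
  by rewrite big_split /= -P_sum n_sum !sum_nat_const muln1 mulnC.
have -> : 2 * (k * m) + amov s = \sum_(x in Range T) (2 * dd x + (s x != x)).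
  by rewrite big_split /= -big_distrr /= -km_sum -a_sum.
apply: leqif_sum => x hx; apply: leqif_eq.
case: (value_facts hx) => h1 h2 h3.
case: (s x =P x) => [fx|nfx] /=; last by lia.
case: (ltngtP (dd x) 1) => hd; [lia | lia |].
by rewrite h3 //; lia.
Qed.

Lemma in_pair (I : finType) (A : {set I}) a b c :
  #|A| <= 2 -> a \in A -> b \in A -> a != b -> c \in A -> c = a \/ c = b.
Proof.
move=> hA ha hb ne hc.
have sub : [set a; b] \subset A by apply/subsetP => x; rewrite !inE => /orP[/eqP->|/eqP->].
have : [set a; b] == A by rewrite eqEcard sub cards2 ne.
by move/eqP => eA; move: hc; rewrite -eA !inE => /orP[/eqP->|/eqP->]; [left|right].
Qed.

Lemma red_sym_solid v w : Tv T v = Tv T w -> v != w -> red_edge T s v w.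
Proof. by move=> e ne; rewrite /red_edge /solid_edge ne e eqxx. Qed.

Section Part2.
Hypothesis Hinv : forall x, s (s x) = x.
Hypothesis Hrow2 : forall i, #|[set j | good (i, j)]| = 2.
Hypothesis Hval : forall x, x \in Range T -> dd x <= 2 /\ (s x != x -> dd x = 1).

Lemma dd1_uniq x (v w : vert m k) : dd x = 1 -> Tv T v = x -> Tv T w = x -> v = w.
Proof.
move=> d1 ev ew; apply/eqP; apply: contraT => ne.
have := two_le_card (A := [set u : vert m k | Tv T u == x]) (a := v) (b := w).
by rewrite !inE ev ew eqxx ne -[X in 1 < X]/(dd x) d1 => /(_ isT isT isT).
Qed.

Lemma moved_Range y : s y != y -> y \in Range T.
Proof. by move=> h; apply: (subsetP sOn); rewrite inE. Qed.

Lemma R1 i j : good (i, j) -> connection_point T s i j.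
Proof.
rewrite /good /= => /orP[//|mv]; apply: contraT => ncp.
exfalso; apply: (no_cp_false (i := i)) => j3.
move: (ncp); rewrite /connection_point negb_or => /andP[/negPn hr _].
case/rowsetP: hr => j2 e2.
have ne : j != j2 by apply: contra mv => /eqP ej; rewrite /Tv /= e2 ej.
have g2 : good (i, j2).
  rewrite /good /Tv /= -e2 Hinv; apply/orP; right.
  by rewrite eq_sym.
apply/negP => cp3.
have g3 : good (i, j3) by apply/orP; left.
have gj : good (i, j) by apply/orP; right.
case: (in_pair (A := [set j | good (i, j)]) (a := j) (b := j2) (c := j3)) => //;
  rewrite ?inE ?Hrow2 //; move=> e3; subst j3.
  exact: (negP ncp cp3).
move: cp3; rewrite /connection_point -e2 Hinv in_rowset /=.
case/existsP => i' /andP[ni /rowsetP[j' e']].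
have mvy : s (T i j) != T i j by exact: mv.
have mv2 : s (s (T i j)) != s (T i j) by rewrite Hinv eq_sym.
have [_ d1] := Hval (moved_Range mv2).
have := dd1_uniq (v := (i, j2)) (w := (i', j')) (d1 mv2).
by rewrite /Tv /= -e2 -e' => /(_ erefl erefl) [] /eqP; rewrite eq_sym (negbTE ni).
Qed.

Lemma R2 i j : ~~ good (i, j) -> red_deg T s (i, j) = 0.
Proof.
rewrite /good /Tv /= negb_or negbK => /andP[ncp /eqP fx].
apply/eqP; rewrite cards_eq0; apply/eqP/setP => [[wi wj]]; rewrite !inE.
rewrite /red_edge /solid_edge /dotted_edge /Tv /= fx.
apply/negbTE; rewrite negb_or; apply/andP; split.
  apply/negP => /andP[ne /eqP e].
  case: (wi =P i) => [ei|/eqP nwi].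
    subst wi; have ej := rowI e; subst wj; by rewrite eqxx in ne.
  by move: ncp; rewrite (cp_other nwi e).
apply/negP => /andP[ne /orP[/eqP e|/eqP e]]; first by rewrite e eqxx in ne.
by move: ne; rewrite -fx in e; rewrite (perm_inj e) eqxx.
Qed.

Lemma R3 i j : connection_point T s i j -> outer_red T s i j.
Proof.
move=> cp.
suff [w0 [hw0 hred]] : exists w0 : vert m k, w0.1 != i /\ forall w, red_edge T s (i, j) w = (w == w0).
  apply/andP; split.
    apply/eqP; rewrite /red_deg -(cards1 w0); apply: eq_card => w; rewrite !inE hred //.
  by apply/forallP => w; rewrite hred; apply/implyP => /eqP ->.
case: (boolP [exists i', (i' != i) && (T i j \in rowset T i')]).
  case/existsP => i' /andP[ni /rowsetP[j' e']].
  have hR : T i j \in Range T by apply: TvR (i, j).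
  have [d2 dm] := Hval hR.
  have fx : s (T i j) = T i j.
    apply/eqP; apply: contraT => mv.
    have := dd1_uniq (v := (i, j)) (w := (i', j')) (dm mv).
    by rewrite /Tv /= -e' => /(_ erefl erefl) [] /eqP; rewrite eq_sym (negbTE ni).
  exists (i', j'); split => // [[wi wj]].
  rewrite /red_edge /solid_edge /dotted_edge /Tv /= fx.
  have nv : (i, j) != (i', j') by apply: contra ni => /eqP [->].
  apply/idP/idP; last first.
    by move/eqP => [-> ->]; rewrite nv e' eqxx.
  case/orP.
    case/andP => ne /eqP e.
    have h1 : (i, j) \in [set u : vert m k | Tv T u == T i j] by rewrite inE.
    have h2 : (i', j') \in [set u : vert m k | Tv T u == T i j] by rewrite inE /Tv /= e'.
    have h3 : (wi, wj) \in [set u : vert m k | Tv T u == T i j] by rewrite inE /Tv /= e.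
    case: (in_pair d2 h1 h2 nv h3).
      by case=> ei ej; subst wi wj; rewrite eqxx in ne.
    by move=> ->.
  case/andP => ne /orP[/eqP e|/eqP e]; first by rewrite e eqxx in ne.
  by move: ne; rewrite -fx in e; rewrite (perm_inj e) eqxx.
move=> nb.
have hs : s (T i j) \notin rowset T i.
  by move: cp; rewrite /connection_point (negbTE nb) orbF.
have nyx : s (T i j) != T i j by apply: contra hs => /eqP ->; apply: in_rowset.
have mv2 : s (s (T i j)) != s (T i j) by rewrite Hinv eq_sym.
have [_ dm] := Hval (moved_Range mv2).
case/imset2P: (moved_Range mv2) => i2 j2 _ _ ey.
exists (i2, j2); split.
  by apply: contra hs => /= /eqP ei; rewrite ey ei in_rowset.
move=> [wi wj].
rewrite /red_edge /solid_edge /dotted_edge /Tv /=.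
apply/idP/idP; last first.
  move/eqP => [-> ->]; rewrite -ey eqxx /=.
  by rewrite (eq_sym (T i j)) nyx orbT.
case/orP.
  case/andP => ne /eqP e.
  case: (wi =P i) => [ei|/eqP nwi].
    subst wi; have ej := rowI e; subst wj; by rewrite eqxx in ne.
  move: nb; apply: contraR => _; apply/existsP; exists wi; rewrite nwi e in_rowset //.
case/andP => ne /orP[/eqP e|/eqP e].
  have := dd1_uniq (v := (wi, wj)) (w := (i2, j2)) (dm mv2).
  by rewrite /Tv /= -e ey => /(_ erefl erefl) ->.
have e2 : T wi wj = s (T i j) by rewrite -e Hinv.
have := dd1_uniq (v := (wi, wj)) (w := (i2, j2)) (dm mv2).
by rewrite /Tv /= e2 ey => /(_ erefl erefl) ->.
Qed.

Lemma circle : irreducible T s -> circle_like T s.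
Proof.
move=> irr; split => // i.
have eqo : forall j, outer_red T s i j = good (i, j).
  move=> j; apply/idP/idP.
    move/andP => [/eqP d1 _]; apply: contraT => ng.
    by move: d1; rewrite R2.
  by move=> g; apply: R3; apply: R1.
split.
  by rewrite -(Hrow2 i); apply: eq_card => j; rewrite !inE eqo.
by move=> j; rewrite eqo => ng; apply: R2.
Qed.

End Part2.

Lemma rows_ge (nr : ~ reducible T s) : 2 * m <= #|[set v | good v]|.
Proof.
rewrite sum_rows; apply: (@leq_trans (\sum_(i < m) 2)).
  by rewrite sum_nat_const card_ord mulnC.
by apply: leq_sum => i _; apply: row_good2.
Qed.

Lemma part1_nat : ~ reducible T s -> 2 * m + 2 * sizeT T <= 2 * (k * m) + amov s.
Proof.
move=> nr; have h1 := rows_ge nr; have [h2 _] := value_ineq; lia.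
Qed.

Lemma part2_nat : irreducible T s -> ~ circle_like T s ->
  2 * (k * m) + amov s = 2 * sizeT T + 2 * m -> (forall x, s (s x) = x) -> False.
Proof.
move=> irr ncirc eq inv; apply: ncirc; apply: circle => //.
- move=> i.
  have L := @leqif_sum 'I_m xpredT (fun i => 2 == #|[set j | good (i, j)]|)
     (fun _ => 2) (fun i => #|[set j | good (i, j)]|)
     (fun i _ => leqif_eq (row_good2 i irr.2)).
  case: L => _ E.
  have h1 := rows_ge irr.2; have [h2 _] := value_ineq.
  move: E; rewrite -sum_rows sum_nat_const card_ord.
  have -> : (m * 2 == #|[set v | good v]|) = true by apply/eqP; lia.
  by move/esym/forallP/(_ i)/eqP.
- move=> x hx.
  have [h2 E] := value_ineq.
  have h1 := rows_ge irr.2.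
  have : [forall (x | x \in Range T), gg x + 2 == 2 * dd x + (s x != x)].
    by rewrite -E; apply/eqP; lia.
  move/forallP/(_ x); rewrite hx /= => /eqP ex.
  have [f1 f2 _] := value_facts hx.
  by case: (s x != x) ex => /= ex; split => //; lia.
Qed.

End Main.

From mathcomp Require Import ring lra.
Import GRing.Theory Num.Theory.
Local Open Scope ring_scope.
Lemma ratconv (K n a M : nat) : (2*M + 2*n <= 2*K + a)%N ->
  (M%:R : rat) <= K%:R - n%:R + a%:R / 2.
Proof. rewrite -(ler_nat rat) !natrD ?natrM => h; lra. Qed.

Lemma ratconv2 (K n a M : nat) : K%:R - n%:R + a%:R / 2 = (M%:R : rat) ->
  (2*K + a = 2*n + 2*M)%N.
Proof.
move=> h; apply/eqP; rewrite -(eqr_nat rat) !natrD ?natrM; apply/eqP; lra.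
Qed.

Lemma inv_of (I : finType) (s : {perm I}) :
  ~ (exists x, (3 <= #|porbit s x|)%N) -> forall x, s (s x) = x.
Proof.
move=> h x; case: (boolP (s (s x) == x)) => [/eqP //| ne]; exfalso; apply: h; exists x.
have h0 : x \in porbit s x by apply: porbit_id.
have h1 : s x \in porbit s x by have := mem_porbit s 1 x; rewrite expg1.
have h2 : s (s x) \in porbit s x by have := mem_porbit s 2 x; rewrite expgS expg1 permM.
have n1 : x != s x by apply: contra ne => /eqP e; rewrite -e -e.
have n2 : s x != s (s x) by apply: contra n1 => /eqP/perm_inj e; rewrite {1}e.
have n3 : x != s (s x) by rewrite eq_sym.
have u : uniq [:: x; s x; s (s x)] by rewrite /= !inE negb_or n1 n3 n2.
have := uniq_leq_size u (s2 := enum (porbit s x)).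
rewrite -cardE; apply => y; rewrite mem_enum !inE => /or3P[/eqP->|/eqP->|/eqP->] //.
Qed.

Theorem mainTheorem14 (m k : nat) (T : 'I_m -> 'I_k -> 'I_(k * m))
  (s : {perm 'I_(k * m)}) :
  (2 <= m)%N -> (2 <= k)%N -> inC T s ->
  (irreducible T s ->
     ((k * m)%:R - (sizeT T)%:R + (amov s)%:R / 2 >= (m%:R : rat))) /\
  (irreducible T s -> ~ circle_like T s ->
     (k * m)%:R - (sizeT T)%:R + (amov s)%:R / 2 = (m%:R : rat) ->
     exists x : 'I_(k * m), (3 <= #|porbit s x|)%N).
Proof.
move=> m2 k2 [rowI [sOn conn]]; split.
  move=> irr; apply: ratconv; apply: part1_nat => //; first by case: irr.
move=> irr nc /ratconv2 e.
case: (boolP [exists x, (2 < #|porbit s x|)%N]) => [/existsP[x hx]|hn]; first by exists x.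
have h : ~ (exists x, (3 <= #|porbit s x|)%N).
  by case=> x hx; move/existsP: hn; apply; exists x.
exfalso; apply: (part2_nat rowI sOn conn m2 k2 irr nc e (inv_of h)).
Qed.
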